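(* Let $(G,\cdot)$ be a WIPL with identity $e$, let $(H,\circ)$ be a WIPL with identity $e'$, and let $(A,B,C)$ be an isotopism from $(G,\cdot)$ to $(H,\circ)$. Put $a=e'A^{-1}$ and $b=e'B^{-1}$. Then $C$ is an isomorphism from $(G,\cdot)$ onto $(H,\circ)$ if and only if $(J_\rho L_b J_\lambda,\ J_\lambda R_a J_\rho,\ I)\in AUT(G,\cdot)$. Moreover, when these equivalent conditions hold, $(J_\lambda R_a J_\rho,\ J_\rho L_b J_\lambda,\ R_aL_b)\in AUT(G,\cdot)$, and if in addition $x\cdot x=e$ for all $x\in G$, then $(R_a,L_b,R_aL_b)\in AUT(G,\cdot)$.
   Context: Maps are written on the right of their arguments ($xU$) and composed left to right: $UV$ means first apply $U$, then $V$; $I$ is the identity map. For a loop $(L,\cdot)$ with identity $e$, $x^\rho$ and $x^\lambda$ denote the right and left inverses of $x$ ($x x^\rho=e=x^\lambda x$), and $J_\rho:x\mapsto x^\rho$, $J_\lambda:x\mapsto x^\lambda$, $L_x:y\mapsto xy$, $R_x:y\mapsto yx$ (so $J_\lambda=J_\rho^{-1}$). $L$ is a weak inverse property loop (WIPL) if $xy\cdot z=e$ implies $x\cdot yz=e$ for all $x,y,z\in L$. A triple $(U,V,W)$ of bijections $G\to H$ between loops $(G,\cdot)$ and $(H,\circ)$ is an isotopism if $xU\circ yV=(x\cdot y)W$ for all $x,y\in G$; an autotopism of $G$ is an isotopism from $G$ to itself, and $AUT(G,\cdot)$ denotes the group of autotopisms under componentwise composition. *)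

(* Defs.v *)
From Stdlib Require Import ClassicalEpsilon.
From Corelib Require Import ssreflect ssrfun.

Set Implicit Arguments.

(* Maps are written on the right in the paper and composed left to right;
   here a map xU is the Rocq function application U x, and a composite
   UV (first U, then V) is fun x => V (U x). *)

Record is_loop (T : Type) (op : T -> T -> T) (e : T) : Prop := {
  loop_idl : forall x, op e x = x;
  loop_idr : forall x, op x e = x;
  loop_ldiv : forall a b, exists! x, op a x = b;
  loop_rdiv : forall a b, exists! y, op y a = b
}.

Definition is_WIPL (T : Type) (op : T -> T -> T) (e : T) : Prop :=
  is_loop op e /\ (forall x y z, op (op x y) z = e -> op x (op y z) = e).

(* x^rho: the right inverse, x x^rho = e;  x^lambda: the left inverse, x^lambda x = e. *)
Definition rinv (T : Type) (op : T -> T -> T) (e : T) (x : T) : T :=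
  epsilon (inhabits e) (fun y => op x y = e).
Definition linv (T : Type) (op : T -> T -> T) (e : T) (x : T) : T :=
  epsilon (inhabits e) (fun y => op y x = e).

Definition is_isotopism (G H : Type) (op1 : G -> G -> G) (op2 : H -> H -> H)
  (U V W : G -> H) : Prop :=
  bijective U /\ bijective V /\ bijective W /\
  (forall x y, op2 (U x) (V y) = W (op1 x y)).

Definition is_autotopism (G : Type) (op : G -> G -> G) (U V W : G -> G) : Prop :=
  is_isotopism op op U V W.

Definition is_isomorphism (G H : Type) (op1 : G -> G -> G) (op2 : H -> H -> H)
  (C : G -> H) : Prop :=
  bijective C /\ (forall x y, C (op1 x y) = op2 (C x) (C y)).

(* Main.v *)
Require Import Defs.
From Stdlib Require Import ClassicalEpsilon.
From Corelib Require Import ssreflect ssrfun ssrbool.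

Section W.
Context {G : Type} {mul : G -> G -> G} {e : G} (hG : is_WIPL mul e).
Local Notation "x * y" := (mul x y).
Local Notation ri := (rinv mul e).
Local Notation li := (linv mul e).

Lemma lcan a x y : a * x = a * y -> x = y.
Proof.
move=> h; case: (loop_ldiv (proj1 hG) a (a * y)) => z [_ hz].
by rewrite -(hz x h) -(hz y erefl).
Qed.
Lemma rcan a x y : x * a = y * a -> x = y.
Proof.
move=> h; case: (loop_rdiv (proj1 hG) a (y * a)) => z [_ hz].
by rewrite -(hz x h) -(hz y erefl).
Qed.
Lemma ri_spec x : x * ri x = e.
Proof.
rewrite /rinv; apply: (epsilon_spec (inhabits e) (fun y => x * y = e)).
case: (loop_ldiv (proj1 hG) x e) => z [hz _]; by exists z.
Qed.
Lemma li_spec x : li x * x = e.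
Proof.
rewrite /linv; apply: (epsilon_spec (inhabits e) (fun y => y * x = e)).
case: (loop_rdiv (proj1 hG) x e) => z [hz _]; by exists z.
Qed.
Lemma ri_uniq x y : x * y = e -> ri x = y.
Proof. move=> h; apply: (lcan x); by rewrite ri_spec h. Qed.
Lemma li_uniq x y : y * x = e -> li x = y.
Proof. move=> h; apply: (rcan x); by rewrite li_spec h. Qed.
Lemma wip x y z : (x * y) * z = e -> x * (y * z) = e.
Proof. exact: (proj2 hG). Qed.
Lemma wid p q : q * ri (p * q) = ri p.
Proof. symmetry; apply: ri_uniq; apply: wip; exact: ri_spec. Qed.
Lemma wips x y z : x * (y * z) = e -> (x * y) * z = e.
Proof.
move=> h.
have h1 : y * z = ri x by symmetry; apply: ri_uniq.
have h2 : ri (x * y) = z by apply: (lcan y); rewrite wid h1.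
by rewrite -h2 ri_spec.
Qed.
Lemma wid2 p q : li (p * q) * p = li q.
Proof. symmetry; apply: li_uniq; apply: wips; exact: li_spec. Qed.
Lemma lri x : li (ri x) = x.
Proof. apply: li_uniq; exact: ri_spec. Qed.
Lemma rli x : ri (li x) = x.
Proof. apply: ri_uniq; exact: li_spec. Qed.
Lemma Uspec b x : li (b * ri x) * b = x.
Proof. by rewrite wid2 lri. Qed.
Lemma Vspec a y : a * ri (li y * a) = y.
Proof. by rewrite wid rli. Qed.
End W.

Theorem mainTheorem2 (G H : Type) (mul : G -> G -> G) (e : G)
  (circ : H -> H -> H) (e' : H)
  (hG : is_WIPL mul e) (hH : is_WIPL circ e')
  (A B C : G -> H) (hABC : is_isotopism mul circ A B C)
  (a b : G) (ha : A a = e') (hb : B b = e') :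
  (is_isomorphism mul circ C <->
     is_autotopism mul
       (fun x => linv mul e (mul b (rinv mul e x)))      (* J_rho L_b J_lambda *)
       (fun x => rinv mul e (mul (linv mul e x) a))      (* J_lambda R_a J_rho *)
       (fun x => x))                                     (* I *)
  /\ (is_isomorphism mul circ C ->
      is_autotopism mul
        (fun x => rinv mul e (mul (linv mul e x) a))     (* J_lambda R_a J_rho *)
        (fun x => linv mul e (mul b (rinv mul e x)))     (* J_rho L_b J_lambda *)
        (fun x => mul b (mul x a)))                      (* R_a L_b *)
  /\ (is_isomorphism mul circ C -> (forall x, mul x x = e) ->
      is_autotopism mul
        (fun x => mul x a)                               (* R_a *)
        (fun x => mul b x)                               (* L_b *)
        (fun x => mul b (mul x a))).                     (* R_a L_b *)
Proof.
have LG := proj1 hG; have LH := proj1 hH.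
case: hABC => [_ [_ [[Ci CK CKi] hC]]].
have hA x : A x = C (mul x b) by rewrite -hC hb (loop_idr LH).
have hB y : B y = C (mul a y) by rewrite -hC ha (loop_idl LH).
have Cinj x y : C x = C y -> x = y.
  by move=> h; rewrite -(CK x) -(CK y) h.
have Cond : is_isomorphism mul circ C ->
  [/\ forall x y, mul (mul x a) (mul b y) = mul x y,
      forall x, mul (mul x a) b = x,
      forall y, mul a (mul b y) = y,
      forall y, mul b (mul a y) = y &
      forall x, mul (mul x b) a = x].
  case=> _ hiso.
  have c1 x y : mul (mul x b) (mul a y) = mul x y.
    by apply: Cinj; rewrite hiso -hA -hB hC.
  have c2 x : mul (mul x b) a = x.
    by have := c1 x e; rewrite (loop_idr LG) (loop_idr LG).
  have c3 y : mul b (mul a y) = y.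
    by have := c1 e y; rewrite (loop_idl LG) (loop_idl LG).
  have c4 x : mul (mul x a) b = x.
    by apply: (rcan hG a); rewrite c2.
  have c5 y : mul a (mul b y) = y.
    by apply: (lcan hG b); rewrite c3.
  split=> // x y; by rewrite -{2}(c4 x) -{2}(c5 y) c1.
have UV : is_isomorphism mul circ C ->
  (forall x, linv mul e (mul b (rinv mul e x)) = mul x a) /\
  (forall y, rinv mul e (mul (linv mul e y) a) = mul b y).
  move=> /Cond [c1 c4 c5 c3 c2]; split=> x.
    by apply: (rcan hG b); rewrite Uspec // c4.
  by apply: (lcan hG a); rewrite Vspec // c5.
have L1 : is_isomorphism mul circ C -> forall y z,
    mul (mul b y) z = mul b (mul y z).
  move=> hi y z; have [c1 c4 c5 c3 c2] := Cond hi; have [hU hV] := UV hi.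
  set x0 := linv mul e (mul y z).
  have e1 : mul (mul x0 y) z = e by apply: wips => //; exact: li_spec.
  have e2 : rinv mul e (mul x0 y) = z by apply: ri_uniq.
  have := wid hG (mul x0 a) (mul b y); rewrite c1 e2 => ->.
  by rewrite hV.
have L2 : is_isomorphism mul circ C -> forall x y,
    mul x (mul y a) = mul (mul x y) a.
  move=> hi x y; have [c1 c4 c5 c3 c2] := Cond hi; have [hU hV] := UV hi.
  set z0 := rinv mul e (mul x y).
  have e1 : mul x (mul y z0) = e by apply: wip => //; exact: ri_spec.
  have e2 : linv mul e (mul y z0) = x by apply: li_uniq.
  have := wid2 hG (mul y a) (mul b z0); rewrite c1 e2 => ->.
  by rewrite hU.
split; last split.
- split.
  + move=> hi; have [c1 c4 c5 c3 c2] := Cond hi; have [hU hV] := UV hi.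
    split; [|split; [|split]].
    * exists (fun x => mul x b) => x /=; first by rewrite Uspec.
      by rewrite hU c2.
    * exists (fun x => mul a x) => x /=; first by rewrite Vspec.
      by rewrite hV c3.
    * by exists (fun x => x).
    * by move=> x y; rewrite hU hV c1.
  + case=> _ [_ [_ hT]]; split; first by exists Ci.
    move=> x y.
    have E1 : C x = A (linv mul e (mul b (rinv mul e x))) by rewrite hA Uspec.
    have E2 : C y = B (rinv mul e (mul (linv mul e y) a)) by rewrite hB Vspec.
    by rewrite E1 E2 hC hT.
- move=> hi; have [c1 c4 c5 c3 c2] := Cond hi; have [hU hV] := UV hi.
  split; [|split; [|split]].
  + exists (fun x => mul a x) => x /=; by rewrite hV ?c5 ?c3.
  + exists (fun x => mul x b) => x /=; by rewrite hU ?c4 ?c2.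
  + exists (fun z => mul (mul a z) b) => z /=.
      by rewrite c5 c4.
    by rewrite c2 c3.
  + move=> x y; rewrite hU hV L1 // L2 //.
- move=> hi hsq; have [c1 c4 c5 c3 c2] := Cond hi.
  have ab : a = b.
    apply: (lcan hG b); rewrite hsq.
    by have := c2 e; rewrite (loop_idl LG).
  have key z : mul b (mul z a) = z.
    rewrite ab; have := wid hG z b; rewrite (ri_uniq hG _ _ (hsq z)).
    by rewrite (ri_uniq hG _ _ (hsq (mul z b))).
  split; [|split; [|split]].
  + exists (fun x => mul x b) => x /=; by rewrite ?c4 ?c2.
  + exists (fun x => mul a x) => x /=; by rewrite ?c5 ?c3.
  + exists (fun z => z) => z /=; by rewrite key.
  + by move=> x y; rewrite c1 key.
Qed.
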